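(* Let $r\ge1$ and $n\ge1$ be integers and let $\mathcal P(n-1,r,r+1)$ be the set of lattice paths with steps $(1,1)$ (up) and $(1,-r)$ (down) from $(0,0)$ to $((r+1)n,r+1)$ (so with $rn+1$ up steps and $n-1$ down steps); the steps occupy positions $0,1,\dots,(r+1)n-1$, the step in position $m$ starting at the vertex reached after $m$ steps. (1) Let $n_0,\dots,n_r$ be positive integers with $n_0\ge2$ and $\sum_{i=0}^{r}(n_i-1)=n-1$. Among the paths in $\mathcal P(n-1,r,r+1)$ that start with a down step and have, for each $i=0,\dots,r$, exactly $n_i-1$ down steps in positions congruent to $i \pmod{r+1}$, the number having exactly $j$ down steps in positions congruent to $0\pmod{r+1}$ that start on or below the $x$-axis is independent of $j$ for $j=1,\dots,n_0-1$, and equals $\frac{1}{n_0-1}\binom{n-1}{n_0-2}\binom{n}{n_1-1}\cdots\binom{n}{n_r-1}$. (2) Let $n_0,\dots,n_r$ be nonnegative integers with $n_0\ge1$ and $n_0+\cdots+n_r=rn+1$. Among the paths in $\mathcal P(n-1,r,r+1)$ that start with an up step and have, for each $i=0,\dots,r$, exactly $n_i$ up steps in positions congruent to $i\pmod{r+1}$, the number having exactly $j$ up steps in positions congruent to $0\pmod{r+1}$ that start on or below the $x$-axis is independent of $j$ for $j=1,\dots,n_0$, and equals $\frac{1}{n_0}\binom{n-1}{n_0-1}\binom{n}{n_1}\cdots\binom{n}{n_r}$.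
   Context: A step starts on or below the $x$-axis if its initial vertex has $y$-coordinate $\le0$. *)

(* Defs.v *)
From mathcomp Require Import all_boot all_order all_algebra.
Set Implicit Arguments. Unset Strict Implicit. Unset Printing Implicit Defensive.
Import Order.TTheory GRing.Theory Num.Theory.

(* A path of length N = (r+1) n is a finite function 'I_N -> bool:
   true = up step (1,1), false = down step (1,-r).  The step in position m
   starts at the vertex reached after m steps. *)
Notation path_t r n := {ffun 'I_(r.+1 * n) -> bool}.

Definition height (N r : nat) (p : {ffun 'I_N -> bool}) (m : nat) : int :=
  \sum_(k : 'I_N | (k < m)%N) (if p k then 1%:Z else (- (r%:Z))%R).

(* membership in P(n-1, r, r+1): exactly n-1 down steps (hence r n + 1 up
   steps, ending at ((r+1) n, r+1)) *)
Definition in_P (N n : nat) (p : {ffun 'I_N -> bool}) : bool :=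
  #|[set k | ~~ p k]| == n.-1.

Definition starts_down (N : nat) (p : {ffun 'I_N -> bool}) : bool :=
  [exists k : 'I_N, (val k == 0) && ~~ p k].
Definition starts_up (N : nat) (p : {ffun 'I_N -> bool}) : bool :=
  [exists k : 'I_N, (val k == 0) && p k].

Definition steps_mod (N r : nat) (b : bool) (p : {ffun 'I_N -> bool}) (i : nat) : nat :=
  #|[set k : 'I_N | (p k == b) && (k %% r.+1 == i)]|.

Definition low_steps0 (N r : nat) (b : bool) (p : {ffun 'I_N -> bool}) : nat :=
  #|[set k : 'I_N | [&& p k == b, k %% r.+1 == 0 & (height r p k <= 0)%R]]|.

(* Main.v *)
Require Import Defs.
From mathcomp Require Import all_boot all_order all_algebra.
From mathcomp Require Import zify ring lra.
Set Implicit Arguments. Unset Strict Implicit. Unset Printing Implicit Defensive.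
Import Order.TTheory GRing.Theory Num.Theory.

Lemma big_ltS (R : Type) (idx : R) (op : Monoid.com_law idx) N (F : 'I_N -> R) m
  (hm : m < N) :
  \big[op/idx]_(l : 'I_N | l < m.+1) F l = op (\big[op/idx]_(l : 'I_N | l < m) F l) (F (Ordinal hm)).
Proof.
rewrite (bigD1 (Ordinal hm)) //= Monoid.mulmC; apply: congr2 => //.
apply: eq_bigl => l; rewrite ltnS leq_eqVlt -val_eqE /=.
by case: (ltngtP l m).
Qed.

Lemma big_lt0 (R : Type) (idx : R) (op : Monoid.com_law idx) N (F : 'I_N -> R) :
  \big[op/idx]_(l : 'I_N | l < 0) F l = idx.
Proof. by rewrite big_pred0. Qed.

Lemma arith (n k X : nat) : k < n -> (k <= X) = (n.-1 * k <= n * X).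
Proof.
move=> hk; apply/idP/idP => h.
  by apply: leq_trans (leq_mul (leq_pred n) (leqnn k)) _; rewrite leq_mul2l h orbT.
apply: contraLR h; rewrite -!ltnNge => h.
have h1 : n * X <= n * k.-1 by rewrite leq_mul2l; apply/orP; right; rewrite -ltnS prednK //; lia.
apply: (leq_ltn_trans h1). case: n hk {h1} => // n hk /=. case: k h hk => // k h hk /=.
rewrite mulnS mulSn; lia.
Qed.


Lemma rank_unique (T : finType) (M : {set T}) (f : T -> int) :
  {in M &, injective f} -> forall j, 0 < j <= #|M| ->
  #|[set s in M | #|[set t in M | (f t <= f s)%R]| == j]| = 1.
Proof.
move=> finj j /andP[j0 jM].
pose rk s := #|[set t in M | (f t <= f s)%R]|.
have rk_sub s : rk s <= #|M|.
  by apply: subset_leq_card; apply/subsetP => t; rewrite inE => /andP[].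
have rk_pos s : s \in M -> 0 < rk s.
  by move=> sM; apply/card_gt0P; exists s; rewrite inE sM lexx.
have rk_mono s s' : s \in M -> s' \in M -> (f s < f s')%R -> rk s < rk s'.
  move=> sM s'M lt; apply: proper_card; apply/properP; split.
    apply/subsetP => t; rewrite !inE => /andP[-> h] /=; exact: le_trans h (ltW lt).
  by exists s'; rewrite !inE ?s'M ?lexx // -ltNge.
have rk_inj : {in M &, injective rk}.
  move=> s s' sM s'M e; apply: finj => //; case: (ltgtP (f s) (f s')) => // h.
    by have := rk_mono _ _ sM s'M h; rewrite e ltnn.
  by have := rk_mono _ _ s'M sM h; rewrite e ltnn.
pose g s : 'I_(#|M|.+1) := inord (rk s).
have g_inj : {in M &, injective g}.
  move=> s s' sM s'M /(congr1 val); rewrite /= !inordK ?ltnS ?rk_sub //; exact: rk_inj.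
have img : g @: M = [set~ ord0].
  apply/eqP; rewrite eqEcard card_in_imset // cardsC1 card_ord /= leqnn andbT.
  apply/subsetP => i /imsetP[s sM ->]; rewrite !inE -val_eqE /= inordK ?ltnS ?rk_sub //.
  by rewrite -lt0n rk_pos.
have : (inord j : 'I_(#|M|.+1)) \in g @: M.
  by rewrite img !inE -val_eqE /= inordK ?ltnS // -lt0n.
case/imsetP => s sM /(congr1 val); rewrite /= !inordK ?ltnS ?rk_sub // => ejs.
rewrite (_ : [set _ in M | _] = [set s]) ?cards1 //.
apply/setP => x; rewrite !inE; apply/andP/eqP => [[xM /eqP]|->]; last first.
  by rewrite sM ejs.
by rewrite ejs => /rk_inj; apply.
Qed.
Lemma nodiv_aux n t s u v : t <= s -> s < n -> n.-1 * t + n * u = n.-1 * s + n * v -> t = s.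
Proof.
move=> ts sn e.
have e1 : n * u = n.-1 * (s - t) + n * v.
  apply/eqP; rewrite -(eqn_add2l (n.-1 * t)) e addnA -mulnDr subnKC //.
have uv : v <= u by rewrite -(leq_pmul2l (leq_ltn_trans (leq0n _) sn)) e1 leq_addl.
have e2 : n * (u - v) = n.-1 * (s - t) by rewrite mulnBr e1 addnK.
have e3 : n.-1 * (s - t) + (s - t) = n * (s - t).
  by case: n sn {e e1 e2} => // n _ /=; rewrite mulSn addnC.
case: (posnP (s - t)) => [|x0]; first by lia.
have e4 : s - t = n * ((s - t) - (u - v)) by rewrite mulnBr e2 -e3 addKn.
case: (posnP ((s - t) - (u - v))) => [h0|h].
  by move: x0; rewrite e4 h0 muln0.
have : n <= s - t by rewrite e4 -{1}(muln1 n) leq_mul2l h orbT.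
lia.
Qed.
Lemma nodiv n t s u v : t < n -> s < n -> n.-1 * t + n * u = n.-1 * s + n * v -> t = s.
Proof.
move=> tn sn e; case: (leqP t s) => h; first exact: (@nodiv_aux n t s u v h sn e).
by apply/esym; apply: (@nodiv_aux n s t v u (ltnW h) tn); rewrite e.
Qed.

Lemma ifb_eq (x b : bool) : ((if x then b else ~~ b) == b) = x.
Proof. by case: x; case: b. Qed.

Section S.
Variables (r n : nat).
Local Notation N := (r.+1 * n).
Implicit Types (p q : {ffun 'I_N -> bool}).

Definition D p m : nat := \sum_(l : 'I_N | l < m) (~~ p l : nat).

Lemma D0 p : D p 0 = 0. Proof. exact: big_lt0. Qed.
Lemma DS p m (hm : m < N) : D p m.+1 = D p m + ~~ p (Ordinal hm).
Proof. exact: big_ltS. Qed.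

Lemma height0 p : height r p 0 = 0%R.
Proof. exact: big_lt0. Qed.

Lemma height_D p m : m <= N -> height r p m = (m%:Z - (r.+1 * D p m)%:Z)%R.
Proof.
elim: m => [|m IH] hm; first by rewrite height0 D0 muln0 subrr.
have := @big_ltS _ 0%R +%R _ (fun k : 'I_N => if p k then Posz 1 else (- (Posz r))%R) m hm.
rewrite -/(height r p m.+1) -/(height r p m) => ->.
rewrite IH ?(ltnW hm) // DS.
case: (p _) => /=; rewrite ?addn0 ?addn1; lia.
Qed.

Lemma N_gt0 (k : 'I_N) : 0 < N.
Proof. exact: (leq_ltn_trans (leq0n k) (ltn_ord k)). Qed.

Definition shift s (k : 'I_N) : 'I_N := Ordinal (ltn_pmod (k + s) (N_gt0 k)).
Definition rot s p : {ffun 'I_N -> bool} := [ffun k => p (shift s k)].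

Lemma rotE s p k : rot s p k = p (shift s k).
Proof. by rewrite ffunE. Qed.

Lemma shift_inj s : injective (shift s).
Proof.
move=> a b /(congr1 val) /= /eqP; rewrite eqn_modDr => /eqP.
by rewrite !modn_small // => /val_inj.
Qed.

Lemma rot_rot a b p : (a + b) %% N = 0 -> rot a (rot b p) = p.
Proof.
move=> hab; apply/ffunP => k; rewrite !rotE; congr (p _); apply: val_inj => /=.
by rewrite modnDml -addnA -modnDmr hab addn0 modn_small.
Qed.

Lemma DN p : D p N = #|[set k | ~~ p k]|.
Proof.
rewrite -sum1_card big_mkcond /D [LHS]big_mkcond /=; apply: eq_bigr => l _.
by rewrite inE ltn_ord; case: (p l).
Qed.

Lemma D_rot s q k : s < N -> k <= N ->
  D (rot s q) k + D q s = if s + k < N then D q (s + k) else D q N + D q (s + k - N).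
Proof.
move=> hs; elim: k => [|k IH] hk; first by rewrite D0 addn0 hs.
rewrite DS rotE /= -addnAC IH ?(ltnW hk) //.
case: (ltnP (s + k.+1) N) => h1.
  have h0 : s + k < N by rewrite (leq_ltn_trans _ h1) // leq_add2l.
  have h1' : (s + k).+1 < N by rewrite -addnS.
  rewrite h0 addnS (@DS q (s + k) h0) /shift /=; congr (_ + (~~ q _)); apply: val_inj => /=.
  by rewrite addnC modn_small.
case: (ltnP (s + k) N) => h0.
  have e : s + k.+1 = N by lia.
  rewrite e subnn D0 addn0.
  have := @DS q (s + k) h0; rewrite -addnS e => ->.
  congr (_ + (~~ q _)); apply: val_inj => /=; rewrite addnC modn_small //.
have hlt : s + k - N < N by lia.

have -> : s + k.+1 - N = (s + k - N).+1 by lia.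
rewrite (@DS q (s + k - N) hlt) addnA; congr (_ + (~~ q _)); apply: val_inj => /=.
rewrite addnC -{1}(subnK h0) modnDr modn_small //.
Qed.

Definition key q (t : nat) : int := (Posz (n.-1 * (t %/ r.+1)) - Posz (n * D q t))%R.

Lemma lez_sub (a b c d : nat) : ((Posz a - Posz b <= Posz c - Posz d)%R) = (a + d <= c + b).
Proof. apply/idP/idP => h; lia. Qed.

Lemma low_cond q s k : s < N -> k < N -> s %% r.+1 = 0 -> k %% r.+1 = 0 ->
  D q N = n.-1 ->
  (height r (rot s q) k <= 0)%R = (key q ((k + s) %% N) <= key q s)%R.
Proof.
move=> hs hk s0 k0 hDN.
rewrite height_D ?(ltnW hk) // subr_le0 lez_nat /key lez_sub.
have ek : k = r.+1 * (k %/ r.+1) by rewrite mulnC divnK // /dvdn k0.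
have es : s = r.+1 * (s %/ r.+1) by rewrite mulnC divnK // /dvdn s0.
set X := D (rot s q) k.
have hD := D_rot q hs (ltnW hk); rewrite -/X in hD.
set ka := k %/ r.+1 in ek *; set sa := s %/ r.+1 in es *.
have hka : ka < n by rewrite -(ltn_pmul2l (ltn0Sn r)) -ek.
have hsa : sa < n by rewrite -(ltn_pmul2l (ltn0Sn r)) -es.
rewrite {1}ek leq_pmul2l // (arith _ hka).
case: (ltnP (s + k) N) => h.
  rewrite h in hD; rewrite modn_small; last by rewrite addnC.
  have -> : (k + s) %/ r.+1 = sa + ka by rewrite {1}es {1}ek -mulnDr mulKn // addnC.
  rewrite [s + k]addnC in hD; rewrite -hD mulnDr mulnDr; apply/idP/idP => h'; lia.
rewrite ltnNge h /= in hD.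
have em : (k + s) %% N = s + k - N.
  by rewrite addnC -{1}(subnK h) modnDr modn_small //; lia.
rewrite em.
have et : s + k - N = r.+1 * (sa + ka - n) by rewrite mulnBr mulnDr -es -ek.
rewrite et mulKn //.
have h2 : n <= sa + ka by rewrite -(leq_pmul2l (ltn0Sn r)) mulnDr -es -ek.
have e1 : n.-1 * (sa + ka - n) + n.-1 * n = n.-1 * ka + n.-1 * sa
  by rewrite -mulnDr subnK // mulnDr addnC.
have e2 : n * D q (r.+1 * (sa + ka - n)) + n * n.-1 = n * X + n * D q s
  by rewrite -et -!mulnDr hD hDN addnC.
have e3 : n * n.-1 = n.-1 * n by rewrite mulnC.
apply/idP/idP => h'; lia.
Qed.

Lemma shift_mod s (k : 'I_N) : s %% r.+1 = 0 -> shift s k %% r.+1 = k %% r.+1.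
Proof.
move=> s0 /=; rewrite modn_dvdm; last by rewrite dvdn_mulr.
by rewrite -modnDmr s0 addn0.
Qed.

Lemma low_rot b q (s : 'I_N) : s %% r.+1 = 0 -> D q N = n.-1 ->
  low_steps0 r b (rot s q) =
  #|[set t : 'I_N | [&& q t == b, t %% r.+1 == 0 & (key q t <= key q s)%R]]|.
Proof.
move=> s0 hDN; rewrite /low_steps0 -[X in _ = X](card_preimset _ (@shift_inj s)).
apply: eq_card => k; rewrite !inE rotE shift_mod //.
case: (q _ == b) => //=; case: eqP => //= k0.
exact: (low_cond (ltn_ord s) (ltn_ord k) s0 k0 hDN).
Qed.

Lemma key_inj q (t s : 'I_N) : t %% r.+1 = 0 -> s %% r.+1 = 0 -> key q t = key q s -> t = s.
Proof.
move=> t0 s0 e.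
have h1 : (key q t <= key q s)%R by rewrite e.
have h2 : (key q s <= key q t)%R by rewrite e.
rewrite /key !lez_sub in h1 h2.
have e' : n.-1 * (t %/ r.+1) + n * D q s = n.-1 * (s %/ r.+1) + n * D q t.
  by apply/eqP; rewrite eqn_leq h1 h2.
have ht : t %/ r.+1 < n by rewrite ltn_divLR // [n * _]mulnC.
have hs : s %/ r.+1 < n by rewrite ltn_divLR // [n * _]mulnC.
have := @nodiv n _ _ _ _ ht hs e' => eq.
apply: val_inj; rewrite /= -(divnK (_ : r.+1 %| t)) ?eq ?divnK //; exact/eqP.
Qed.

Definition marks b q := [set t : 'I_N | (q t == b) && (t %% r.+1 == 0)].

Lemma one_rank b q j : D q N = n.-1 -> 0 < j <= #|marks b q| ->
  #|[set s : 'I_N | [&& q s == b, s %% r.+1 == 0 & low_steps0 r b (rot s q) == j]]| = 1.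
Proof.
move=> hDN hj; rewrite -(@rank_unique _ _ (fun t : 'I_N => key q t) _ _ hj); last first.
  move=> t s; rewrite !inE => /andP[_ /eqP t0] /andP[_ /eqP s0]; exact: key_inj.
apply: eq_card => s; rewrite !inE -andbA; case: (q s == b) => //=; case: eqP => //= s0.
rewrite low_rot //; congr (_ == j); apply: eq_card => t; rewrite !inE andbA //.
Qed.

Lemma steps_mod_rot b q (s : nat) i : s %% r.+1 = 0 ->
  steps_mod r b (rot s q) i = steps_mod r b q i.
Proof.
move=> s0; rewrite /steps_mod -[X in _ = X](card_preimset _ (@shift_inj s)).
by apply: eq_card => k; rewrite !inE rotE shift_mod.
Qed.

Lemma in_P_rot q (s : nat) : in_P n (rot s q) = in_P n q.
Proof.
rewrite /in_P -[X in _ = (X == _)](card_preimset _ (@shift_inj s)).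
by congr (_ == _); apply: eq_card => k; rewrite !inE rotE.
Qed.

Definition start b p := [exists k : 'I_N, (val k == 0) && (p k == b)].

Lemma start_rot b q (s : 'I_N) : start b (rot s q) = (q s == b).
Proof.
apply/existsP/idP => [[k /andP[/eqP k0]]|h].
  rewrite rotE => /eqP <-; apply/eqP; congr (q _); apply: val_inj.
  by rewrite /= k0 add0n modn_small.
have k0 : 0 < N := N_gt0 s.
exists (Ordinal k0); rewrite /= rotE; move: h; congr (is_true (q _ == b)); apply: val_inj.
by rewrite /= add0n modn_small.
Qed.

Lemma marks_card b q : #|marks b q| = steps_mod r b q 0.
Proof. by []. Qed.

Lemma rot_inv q (s : 'I_N) : rot s (rot (N - s) q) = q.
Proof. by apply: rot_rot; rewrite subnKC ?modnn // ltnW. Qed.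
Lemma rot_inv' q (s : 'I_N) : rot (N - s) (rot s q) = q.
Proof. by apply: rot_rot; rewrite subnK ?modnn // ltnW. Qed.

Lemma idx_lt (i : 'I_r.+1) (l : 'I_n) : i + r.+1 * l < N.
Proof.
have := ltn_ord i; have := ltn_ord l => hl hi.
apply: (@leq_trans (r.+1 * l.+1)); first by rewrite mulnS ltn_add2r.
by rewrite leq_mul2l hl orbT.
Qed.
Definition idx (i : 'I_r.+1) (l : 'I_n) : 'I_N := Ordinal (idx_lt i l).

Lemma idx_mod i l : idx i l %% r.+1 = i.
Proof. by rewrite /= addnC mulnC modnMDl modn_small. Qed.
Lemma idx_div i l : idx i l %/ r.+1 = l.
Proof. by rewrite /= addnC mulnC divnMDl // divn_small ?addn0. Qed.
Lemma idxK (k : 'I_N) (i : 'I_r.+1) : k %% r.+1 = i ->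
  exists l : 'I_n, k = idx i l.
Proof.
move=> ki.
have hl : k %/ r.+1 < n by rewrite ltn_divLR // [n * _]mulnC.
exists (Ordinal hl); apply: val_inj; move: (divn_eq k r.+1); rewrite /= ki; lia.
Qed.
Lemma idx_inj i : injective (idx i).
Proof. by move=> a b /(congr1 (fun k : 'I_N => k %/ r.+1)); rewrite !idx_div => /val_inj. Qed.

Lemma card_Z : #|[set s : 'I_N | s %% r.+1 == 0]| = n.
Proof.
rewrite -[RHS]card_ord -(card_imset _ (@idx_inj ord0)).
apply: eq_card => k; rewrite !inE; apply/idP/imsetP => [/eqP k0|[l _ ->]].
  by have [l ->] := @idxK k ord0 k0; exists l.
by rewrite idx_mod.
Qed.

Lemma count_main b (c : nat -> nat) j : 0 < j <= c 0 ->
  #|[set p : {ffun 'I_N -> bool} | [&& in_P n p, start b p, [forall i : 'I_r.+1, steps_mod r b p i == c i]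
              & low_steps0 r b p == j]]| * n
  = #|[set q : {ffun 'I_N -> bool} | in_P n q && [forall i : 'I_r.+1, steps_mod r b q i == c i]]|.
Proof.
move=> hj.
set X := [set q : {ffun 'I_N -> bool} | in_P n q && [forall i : 'I_r.+1, _]].
set A := [set p : {ffun 'I_N -> bool} | [&& in_P n p, start b p, _ & _]].
set Z := [set s : 'I_N | s %% r.+1 == 0].
pose Pairs := [set x : {ffun 'I_N -> bool} * 'I_N | (x.1 \in X) &&
   [&& x.1 x.2 == b, x.2 %% r.+1 == 0 & low_steps0 r b (rot x.2 x.1) == j]].
pose Phi (x : {ffun 'I_N -> bool} * 'I_N) := (rot x.2 x.1, x.2).
have Phi_inj : injective Phi.
  move=> [q s] [q' s'] [e1 e2] /=; rewrite /= in e1 e2; subst s'.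
  by rewrite -(rot_inv' q s) e1 rot_inv'.
have inX q (s : nat) : s %% r.+1 = 0 -> (rot s q \in X) = (q \in X).
  move=> s0; rewrite !inE in_P_rot; congr (_ && _).
  by apply/forallP/forallP => h i; move: (h i); rewrite steps_mod_rot.
have eAZ : setX A Z = Phi @: Pairs.
  apply/setP => [[p s]]; rewrite !inE /=; apply/idP/imsetP.
    case/andP => /and4P[hP hst hc hl] /eqP s0.
    have Ns0 : (N - s) %% r.+1 = 0.
      by apply/eqP; rewrite -/(dvdn _ _) dvdn_sub ?dvdn_mulr // /dvdn s0.
    exists (rot (N - s) p, s); last by rewrite /Phi /= rot_inv.
    rewrite !inE /= rot_inv s0 eqxx hl andbT.
    rewrite in_P_rot hP /= andbT; apply/andP; split.
      by apply/forallP => i; rewrite steps_mod_rot //; exact: (forallP hc i).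
    rewrite rotE.
    case/existsP: hst => k /andP[/eqP k0 hk]; move: hk; congr (is_true (p _ == b)).
    apply: val_inj; rewrite /= k0 subnKC ?modnn // ltnW //.
  case=> [[q s']] hq [-> ->]; move: hq; rewrite !inE /=.
  case/andP => hX /and3P[hqs s0 hl]; rewrite s0 hl /= andbT start_rot hqs.
  case/andP: hX => hP hc; rewrite in_P_rot hP /= andbT; apply/forallP => i.
  rewrite steps_mod_rot; [exact: (forallP hc i) | exact/eqP].
have cP : #|Pairs| = #|X|.
  rewrite -sum1_card (_ : \sum_(x in Pairs) 1 = \sum_(q : {ffun 'I_N -> bool})
     \sum_(s : 'I_N) (if (q, s) \in Pairs then 1 else 0)); last first.
    by rewrite pair_bigA big_mkcond; apply: eq_bigr => -[].
  rewrite -[RHS]sum1_card [RHS]big_mkcond /=; apply: eq_bigr => q _.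
  transitivity #|[set s : 'I_N | (q, s) \in Pairs]|.
    by rewrite -sum1_card [RHS]big_mkcond; apply: eq_bigr => s _; rewrite [s \in _]inE.
  case hqX: (q \in X).
    move: (hqX); rewrite !inE => /andP[hP /forallP hc].
    have hDN : D q N = n.-1 by rewrite DN; apply/eqP.
    have hj' : 0 < j <= #|marks b q| by rewrite marks_card (eqP (hc ord0)).
    rewrite -(one_rank hDN hj').
    by apply: eq_card => s; rewrite !inE /= hP; move/forallP: hc => ->.
  apply/eqP; rewrite cards_eq0; apply/eqP/setP => s; rewrite !inE.
  by move: hqX; rewrite !inE /= => ->.
by rewrite -[n in _ * n]card_Z -cardsX eAZ card_imset // cP.
Qed.

Lemma card_fam (c : nat -> nat) :
  #|[set g : {ffun 'I_r.+1 -> {set 'I_n}} | [forall i, #|g i| == c i]]|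
  = \prod_(i < r.+1) 'C(n, c i).
Proof.
have := card_family (fun i : 'I_r.+1 => [pred B : {set 'I_n} | #|B| == c i]).
rewrite foldrE big_map big_enum /= => e.
rewrite (eq_bigr (fun i : 'I_r.+1 => #|[pred B : {set 'I_n} | #|B| == c i]|)); last first.
  by move=> i _; rewrite -{1}(card_ord n) -card_draws; apply: eq_card => B; rewrite !inE.
rewrite -e; apply: eq_card => g; rewrite !inE; apply/forallP/familyP => h i; move: (h i); by rewrite !inE.
Qed.

Definition Om b q : {ffun 'I_r.+1 -> {set 'I_n}} := [ffun i => [set l : 'I_n | q (idx i l) == b]].

Lemma steps_Om b q (i : 'I_r.+1) : steps_mod r b q i = #|Om b q i|.
Proof.
rewrite ffunE -(card_imset _ (@idx_inj i)); apply: eq_card => k; rewrite !inE.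
apply/andP/imsetP => [[hk /eqP ki]|[l]].
  by have [l el] := idxK ki; exists l; rewrite ?inE -?el.
by rewrite inE => hl ->; rewrite hl idx_mod.
Qed.

Lemma modord_lt (k : 'I_N) : k %% r.+1 < r.+1. Proof. exact: ltn_pmod. Qed.
Lemma divord_lt (k : 'I_N) : k %/ r.+1 < n.
Proof. by rewrite ltn_divLR // [n * _]mulnC. Qed.

Lemma Om_inj b : injective (Om b).
Proof.
move=> q q' e; apply/ffunP => k.
have [l el] := @idxK k (Ordinal (modord_lt k)) erefl.
have := congr1 (fun g : {ffun 'I_r.+1 -> {set 'I_n}} => l \in g (Ordinal (modord_lt k))) e.
by rewrite /= !ffunE !inE -el; case: (q k); case: (q' k); move: e; case: b.
Qed.

Lemma count_X b (c : nat -> nat) :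
  #|[set q : {ffun 'I_N -> bool} | [forall i : 'I_r.+1, steps_mod r b q i == c i]]|
  = \prod_(i < r.+1) 'C(n, c i).
Proof.
rewrite -card_fam -(card_imset _ (@Om_inj b)); apply: eq_card => g.
rewrite !inE; apply/imsetP/forallP => [[q]|h].
  by rewrite inE => /forallP hq -> i; rewrite -steps_Om.
pose q := [ffun k : 'I_N => if Ordinal (divord_lt k) \in g (Ordinal (modord_lt k)) then b else ~~ b].
exists q.
  rewrite inE; apply/forallP => i; rewrite steps_Om.
  suff -> : Om b q i = g i by exact: h.
  apply/setP => l; rewrite !ffunE !inE ffunE.
  have -> : Ordinal (divord_lt (idx i l)) = l by apply: val_inj; rewrite /= idx_div.
  have -> : Ordinal (modord_lt (idx i l)) = i by apply: val_inj; rewrite /= idx_mod.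
  by rewrite ifb_eq.
apply/ffunP => i; apply/setP => l; rewrite !ffunE !inE ffunE.
have -> : Ordinal (divord_lt (idx i l)) = l by apply: val_inj; rewrite /= idx_div.
have -> : Ordinal (modord_lt (idx i l)) = i by apply: val_inj; rewrite /= idx_mod.
by rewrite ifb_eq.
Qed.

Lemma card_part b q : #|[set k : 'I_N | q k == b]| = \sum_(i < r.+1) steps_mod r b q i.
Proof.
rewrite -sum1_card big_mkcond /=.
rewrite (eq_bigr (fun k : 'I_N => \sum_(i < r.+1) (((q k == b) && (k %% r.+1 == i)) : nat))).
  rewrite exchange_big /=; apply: eq_bigr => i _.
  by rewrite /steps_mod -sum1_card [RHS]big_mkcond /=; apply: eq_bigr => k _; rewrite inE.
move=> k _; rewrite inE (bigD1 (Ordinal (modord_lt k))) //= eqxx andbT big1 ?addn0.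
  by case: (q k == b).
move=> i hi; rewrite (_ : (k %% r.+1 == i) = false) ?andbF //.
by apply/negbTE; apply: contra hi => /eqP e; apply/eqP/val_inj.
Qed.
End S.

Lemma final_arith (A n m P : nat) : 0 < n -> 0 < m ->
  A * n = 'C(n, m) * P -> A * m = 'C(n.-1, m.-1) * P.
Proof.
move=> n0 m0 e.
have hb : n * 'C(n.-1, m.-1) = m * 'C(n, m) by rewrite mul_bin_diag prednK.
apply/eqP; rewrite -(eqn_pmul2l n0); apply/eqP.
rewrite (_ : n * (A * m) = A * n * m); last by ring.
rewrite (_ : n * ('C(n.-1, m.-1) * P) = (n * 'C(n.-1, m.-1)) * P); last by ring.
rewrite e hb; ring.
Qed.

Local Open Scope ring_scope.
Lemma final_rat (A m C P : nat) (Pr : rat) : (0 < m)%N -> (A * m = C * P)%N -> Pr = P%:R ->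
  (A%:R : rat) = (m%:R^-1 * C%:R * Pr)%R.
Proof.
move=> m0 e ->; rewrite -mulrA -natrM -e natrM mulrC -mulrA mulfV ?mulr1 //.
by rewrite pnatr_eq0 -lt0n.
Qed.

Local Close Scope ring_scope.
Unset Implicit Arguments.
Theorem theorem16 (r n : nat) (hr : 1 <= r) (hn : 1 <= n) :
  (forall nn : nat -> nat,
     (forall i, i <= r -> 0 < nn i) -> 2 <= nn 0 ->
     \sum_(i < r.+1) (nn i - 1) = n - 1 ->
     forall j, 1 <= j <= nn 0 - 1 ->
     (#|[set p : path_t r n | [&& in_P n p, starts_down p,
          [forall i : 'I_r.+1, steps_mod r false p i == nn i - 1]
        & low_steps0 r false p == j]]|%:R : rat)
     = (((nn 0 - 1)%N%:R)^-1 * ('C(n - 1, nn 0 - 2)%N)%:R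
         * \prod_(1 <= i < r.+1) ('C(n, nn i - 1)%N)%:R)%R)
  /\
  (forall nn : nat -> nat,
     1 <= nn 0 ->
     \sum_(i < r.+1) nn i = r * n + 1 ->
     forall j, 1 <= j <= nn 0 ->
     (#|[set p : path_t r n | [&& in_P n p, starts_up p,
          [forall i : 'I_r.+1, steps_mod r true p i == nn i]
        & low_steps0 r true p == j]]|%:R : rat)
     = (((nn 0%N)%:R)^-1 * ('C(n - 1, nn 0 - 1)%N)%:R
         * \prod_(1 <= i < r.+1) ('C(n, nn i)%N)%:R)%R).
Proof.
split.
- move=> nn hpos h2 hsum j hj.
  have := @count_main r n false (fun i => nn i - 1) j hj.
  rewrite (_ : [set q | in_P n q && [forall i : 'I_r.+1, _]] = [set q : {ffun 'I_(r.+1 * n) -> bool} |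
       [forall i : 'I_r.+1, steps_mod r false q i == nn i - 1]]); last first.
    apply/setP => q; rewrite !inE; case: forallP => hq; rewrite ?andbF ?andbT //; rewrite /in_P.
    rewrite (_ : [set k | ~~ q k] = [set k | q k == false]); last first.
      by apply/setP => k; rewrite !inE; case: (q k).
    rewrite card_part (eq_bigr _ (fun i _ => eqP (hq i))) hsum subn1 eqxx //.
  rewrite (@count_X r n false (fun i => nn i - 1)) big_ord_recl /= => e.
  have m0 : 0 < nn 0 - 1 by lia.
  have e' := final_arith hn m0 e.
  rewrite -!subn1 (_ : nn 0 - 1 - 1 = nn 0 - 2) in e'; last by lia.
  rewrite -(@eq_card _ [set p : path_t r n | [&& in_P n p, start false p,
          [forall i : 'I_r.+1, steps_mod r false p i == nn i - 1]
        & low_steps0 r false p == j]]); last first.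
    move=> p; rewrite !inE; congr [&& _, _, _ & _].
    by apply/existsP/existsP => -[k hk]; exists k; move: hk; case: (p k).
  apply: (final_rat m0 e').
  by rewrite natr_prod big_add1 big_mkord.
- move=> nn h1 hsum j hj.
  have := @count_main r n true nn j hj.
  rewrite (_ : [set q | in_P n q && [forall i : 'I_r.+1, _]] = [set q : {ffun 'I_(r.+1 * n) -> bool} |
       [forall i : 'I_r.+1, steps_mod r true q i == nn i]]); last first.
    apply/setP => q; rewrite !inE; case: forallP => hq; rewrite ?andbF ?andbT //; rewrite /in_P.
    have hc : #|[set k | q k == true]| = r * n + 1.
      by rewrite card_part (eq_bigr _ (fun i _ => eqP (hq i))) hsum.
    have := cardsC [set k | q k == true].
    rewrite card_ord (_ : ~: [set k | q k == true] = [set k | ~~ q k]); last first.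
      by apply/setP => k; rewrite !inE; case: (q k).
    rewrite hc => hh; have e2 : r.+1 * n = r * n + n by rewrite mulSn addnC.
    apply/eqP; move: (#|[set k | ~~ q k]|) hh => x hh; move: (r * n) hh e2 => y hh e2; lia.
  rewrite (@count_X r n true nn) big_ord_recl /= => e.
  have e' := final_arith hn h1 e.
  rewrite -!subn1 in e'.
  rewrite -(@eq_card _ [set p : path_t r n | [&& in_P n p, start true p,
          [forall i : 'I_r.+1, steps_mod r true p i == nn i]
        & low_steps0 r true p == j]]); last first.
    move=> p; rewrite !inE; congr [&& _, _, _ & _].
    by apply/existsP/existsP => -[k hk]; exists k; move: hk; case: (p k).
  apply: (final_rat h1 e').
  by rewrite natr_prod big_add1 big_mkord.
Qed.
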